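(* In the setting described in the context, the left kernel of $\mathbf G$ has dimension equal to the number of vertices of the mesh: $$\dim\ker(\mathbf G^T)=|\mathring{\mathcal V}|+|\mathcal V_\partial|=|\mathcal V|,$$ and a basis of $\ker(\mathbf G^T)$ can be constructed consisting of one vector associated with each vertex of the mesh.
   Context: $\Omega\subset\mathbb{R}^2$ is a bounded, connected, open polygonal domain (possibly with holes) and $\mathcal T$ a conforming triangulation of $\Omega$ with edges $\mathcal E$ and vertices $\mathcal V$, each triangle having at most one edge on $\partial\Omega$. $\mathring{\mathcal E}$ is the set of internal edges (shared by two triangles), $\mathring{\mathcal V}$ the set of internal vertices and $\mathcal V_\partial$ the set of boundary vertices. Every edge is oriented (from $A=(x_A,y_A)$ to $B=(x_B,y_B)$) and all triangles have the same rotation sense; $\delta_T^\Gamma=+1$ if the orientation of the edge $\Gamma\subset\partial T$ agrees with that of $\partial T$, $-1$ otherwise. $\boldsymbol{\Delta}$ is the $|\mathcal T|\times|\mathring{\mathcal E}|$ matrix with entry $\delta_T^\Gamma$ if $\Gamma\in\mathring{\mathcal E}$ is an edge of $T$ and $0$ otherwise. For each internal edge, $a_\Gamma=y_B-y_A$, $b_\Gamma=x_A-x_B$, $c_\Gamma=x_By_A-y_Bx_A$, and $\mathbf a,\mathbf b,\mathbf c$ are the corresponding diagonal $|\mathring{\mathcal E}|\times|\mathring{\mathcal E}|$ matrices. $\mathbf G$ is the $(3|\mathcal T|+|\mathring{\mathcal E}|)\times 3|\mathring{\mathcal E}|$ matrix $$\mathbf G=\begin{pmatrix}\boldsymbol{\Delta}&0&0\\0&\boldsymbol{\Delta}&0\\0&0&\boldsymbol{\Delta}\\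 \mathbf c&\mathbf a&\mathbf b\end{pmatrix}.$$ *)

(* Defs.v *)
From HB Require Import structures.
From mathcomp Require Import all_boot all_order all_algebra.
From mathcomp Require Import boolp classical_sets reals topology normedtype.
Set Implicit Arguments. Unset Strict Implicit. Unset Printing Implicit Defensive.
Import Order.TTheory GRing.Theory Num.Theory.
Local Open Scope ring_scope.
Local Open Scope classical_set_scope.
Import numFieldNormedType.Exports.

(* A mesh is given by
   - a finite type V of vertices with positions p : V -> R * R,
   - a finite type T of triangles, triangle t having vertices tv t 0, tv t 1,
     tv t 2 listed in its rotation sense (boundary of t traversed
     tv t 0 -> tv t 1 -> tv t 2 -> tv t 0),
   - a finite type E of oriented edges, edge e going from src e (= A) to
     dst e (= B). *)
Section Mesh.
Variables (R : realType) (V T E : finType) (p : V -> R * R)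
  (tv : T -> 'I_3 -> V) (src dst : E -> V).

Definition tvset (t : T) : {set V} := [set tv t i | i : 'I_3]%SET.
Definition evset (e : E) : {set V} := [set src e; dst e]%SET.

Definition conv (S : {set V}) : set (R * R) :=
  [set x | exists w : V -> R, (forall v, 0 <= w v) /\
     (forall v, v \notin S -> w v = 0) /\ \sum_v w v = 1 /\
     x = (\sum_v w v * (p v).1, \sum_v w v * (p v).2)].

Definition closed_tri (t : T) : set (R * R) := conv (tvset t).
Definition segment (e : E) : set (R * R) := conv (evset e).

Definition Omega : set (R * R) := interior [set x | exists t, closed_tri t x].
Definition bdry : set (R * R) := closure Omega `\` Omega.

(* twice the signed area of triangle t *)
Definition tri_det (t : T) : R :=
  let a := p (tv t ord0) in let b := p (tv t (ordS ord0)) in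
  let c := p (tv t (ordS (ordS ord0))) in
  (b.1 - a.1) * (c.2 - a.2) - (b.2 - a.2) * (c.1 - a.1).

Definition pos_side (t : T) (e : E) : bool :=
  [exists i : 'I_3, (src e == tv t i) && (dst e == tv t (ordS i))].
Definition neg_side (t : T) (e : E) : bool :=
  [exists i : 'I_3, (dst e == tv t i) && (src e == tv t (ordS i))].
Definition side (t : T) (e : E) : bool := pos_side t e || neg_side t e.

Definition delta (t : T) (e : E) : R :=
  if pos_side t e then 1 else if neg_side t e then -1 else 0.

Definition internal (e : E) : bool := (#|[set t | side t e]%SET| == 2)%N.
Definition Eint : finType := {e : E | internal e}.

Definition a_coef (e : E) : R := (p (dst e)).2 - (p (src e)).2.
Definition b_coef (e : E) : R := (p (src e)).1 - (p (dst e)).1.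
Definition c_coef (e : E) : R :=
  (p (dst e)).1 * (p (src e)).2 - (p (dst e)).2 * (p (src e)).1.

Definition RowI : finType := (T + T + T + Eint)%type.
Definition ColI : finType := (Eint + Eint + Eint)%type.

Definition Gfun (r : RowI) (c : ColI) : R :=
  match r, c with
  | inl (inl (inl t)), inl (inl e) => delta t (val e)
  | inl (inl (inr t)), inl (inr e) => delta t (val e)
  | inl (inr t), inr e => delta t (val e)
  | inr f, inl (inl e) => if f == e then c_coef (val e) else 0
  | inr f, inl (inr e) => if f == e then a_coef (val e) else 0
  | inr f, inr e => if f == e then b_coef (val e) else 0
  | _, _ => 0
  end.

Definition Gmx : 'M[R]_(#|{: RowI}|, #|{: ColI}|) :=
  \matrix_(i, j) Gfun (enum_val i) (enum_val j).

Definition same_rotation_sense : Prop :=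
  (forall t, 0 < tri_det t) \/ (forall t, tri_det t < 0).

(* conformity: two distinct closed triangles meet in the empty set, a common
   vertex or a common edge *)
Definition conforming : Prop :=
  forall t t', t != t' ->
    (#|tvset t :&: tvset t'| <= 2)%N /\
    closed_tri t `&` closed_tri t' = conv (tvset t :&: tvset t').

Definition mesh_vertices : Prop := forall v, exists t, v \in tvset t.
Definition mesh_edges : Prop :=
  (forall e, exists t, side t e) /\
  (forall t (i : 'I_3), exists e, evset e = [set tv t i; tv t (ordS i)]%SET) /\
  (forall e e', evset e = evset e' -> e = e').

(* Omega is connected (it is open and bounded by construction) *)
Definition domain_connected : Prop := connected Omega.

(* polygonal domain (possibly with holes): the boundary is a disjoint union of
   simple closed polygons, i.e. every mesh vertex lying on the boundary is the
   endpoint of exactly two edges lying on the boundary *)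
Definition polygonal_boundary : Prop :=
  forall v, bdry (p v) ->
    exists e1 e2, e1 != e2 /\ v \in evset e1 /\ v \in evset e2 /\
      segment e1 `<=` bdry /\ segment e2 `<=` bdry /\
      (forall e, v \in evset e -> segment e `<=` bdry -> e = e1 \/ e = e2).

Definition one_bdry_edge : Prop :=
  forall t e1 e2, side t e1 -> side t e2 ->
    segment e1 `<=` bdry -> segment e2 `<=` bdry -> e1 = e2.

Definition int_vertices : {set V} := [set v | `[< Omega (p v) >]]%SET.
Definition bdry_vertices : {set V} := [set v | `[< bdry (p v) >]]%SET.

End Mesh.

(* Main.v *)
Require Import Defs.
From HB Require Import structures.
From mathcomp Require Import all_boot all_order all_algebra.
From mathcomp Require Import boolp classical_sets reals topology normedtype.
From mathcomp Require Import ring lra.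
Import Order.TTheory GRing.Theory Num.Theory.
Import numFieldNormedType.Exports.
Local Open Scope ring_scope.
Set Implicit Arguments. Unset Strict Implicit. Unset Printing Implicit Defensive.

Notation nx := (@ordS 3).
Definition o0 : 'I_3 := ord0.
Definition o1 : 'I_3 := nx o0.
Definition o2 : 'I_3 := nx o1.

Lemma cases3 (i : 'I_3) : i = o0 \/ i = o1 \/ i = o2.
Proof.
case: i => [[|[|[|m]]] Hm] //.
- by left; apply/val_inj.
- by right; left; apply/val_inj.
- by right; right; apply/val_inj.
Qed.

Lemma nxo2 : nx o2 = o0. Proof. by apply/val_inj. Qed.

Lemma nx3 (i : 'I_3) : nx (nx (nx i)) = i.
Proof. by case: (cases3 i) => [->|[->|->]]; apply/val_inj. Qed.

Lemma nx_neq1 (i : 'I_3) : (nx i == i) = false.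
Proof. by case: (cases3 i) => [->|[->|->]]. Qed.
Lemma nx_neq2 (i : 'I_3) : (nx (nx i) == i) = false.
Proof. by case: (cases3 i) => [->|[->|->]]. Qed.
Lemma nx_neq3 (i : 'I_3) : (nx (nx i) == nx i) = false.
Proof. by case: (cases3 i) => [->|[->|->]]. Qed.

Lemma eq_nx1 (i : 'I_3) : (i == nx i) = false.
Proof. by rewrite eq_sym nx_neq1. Qed.
Lemma eq_nx2 (i : 'I_3) : (i == nx (nx i)) = false.
Proof. by rewrite eq_sym nx_neq2. Qed.
Lemma eq_nx3 (i : 'I_3) : (nx i == nx (nx i)) = false.
Proof. by rewrite eq_sym nx_neq3. Qed.
Ltac simpl3 := rewrite ?eqxx ?nx_neq1 ?nx_neq2 ?nx_neq3 ?eq_nx1 ?eq_nx2 ?eq_nx3 ?nx3 /= ?mulr1n ?mulr0n ?mulr1 ?mulr0 ?addr0 ?add0r.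

Lemma all3 (i k : 'I_3) : k = i \/ k = nx i \/ k = nx (nx i).
Proof.
case: (cases3 i) => [->|[->|->]]; case: (cases3 k) => [->|[->|->]];
  rewrite ?nxo2 ?nx3; tauto.
Qed.

Lemma sum3 (R : nmodType) (F : 'I_3 -> R) : \sum_(j < 3) F j = F o0 + F o1 + F o2.
Proof.
rewrite !big_ord_recl big_ord0 addr0 addrA.
by congr (_ + F _ + F _); apply/val_inj.
Qed.

Lemma sum3i (R : nmodType) (F : 'I_3 -> R) i :
  \sum_(j < 3) F j = F i + F (nx i) + F (nx (nx i)).
Proof.
rewrite sum3; case: (cases3 i) => [->|[->|->]] //.
- by rewrite -/o2 nxo2 [RHS]addrC addrA.
- by rewrite nxo2 -/o1 -[RHS]addrA [RHS]addrC.
Qed.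

Section Geo.
Variables (R : realType) (V T E : finType) (p : V -> R * R)
  (tv : T -> 'I_3 -> V) (src dst : E -> V).

Local Notation P t i := (p (tv t i)).
Local Notation D t := (tri_det p tv t).

Definition Dt (a b c : R * R) :=
  (b.1 - a.1) * (c.2 - a.2) - (b.2 - a.2) * (c.1 - a.1).
Definition det2 (u w : R * R) := u.1 * w.2 - u.2 * w.1.

Definition lam t i (X : R * R) := Dt X (P t (nx i)) (P t (nx (nx i))) / D t.
Definition lx t i := ((P t (nx i)).1 * (P t (nx (nx i))).2
                      - (P t (nx i)).2 * (P t (nx (nx i))).1) / D t.
Definition ly t i := ((P t (nx i)).2 - (P t (nx (nx i))).2) / D t.
Definition lz t i := ((P t (nx (nx i))).1 - (P t (nx i)).1) / D t.

Lemma lam_aff t i X : lam t i X = lx t i + ly t i * X.1 + lz t i * X.2.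
Proof. rewrite /lam /lx /ly /lz /Dt; ring. Qed.

Lemma Dt_rot t i : Dt (P t i) (P t (nx i)) (P t (nx (nx i))) = D t.
Proof.
rewrite /tri_det /Dt; case: (cases3 i) => [->|[->|->]]; rewrite ?nxo2 ?nx3 //=;
  rewrite -/o0 -/o1 -/o2 ?nxo2; ring.
Qed.

Hypothesis Dnz : forall t, D t != 0.

Lemma lam_vert t i j : lam t i (P t j) = (i == j)%:R.
Proof.
rewrite /lam; case: (all3 i j) => [->|[->|->]].
- by rewrite Dt_rot eqxx divff.
- by rewrite eq_sym nx_neq1 /Dt; apply/eqP; rewrite mulf_eq0; apply/orP; left; apply/eqP; ring.
- by rewrite eq_sym nx_neq2 /Dt; apply/eqP; rewrite mulf_eq0; apply/orP; left; apply/eqP; ring.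
Qed.

Lemma tv_inj t : injective (tv t).
Proof.
move=> i j Hij; have := lam_vert t i j; rewrite -Hij lam_vert eqxx.
by case: eqP => // _ /eqP; rewrite oner_eq0.
Qed.


Lemma Dnz' t : Dt (P t o0) (P t o1) (P t o2) != 0.
Proof. exact: Dnz. Qed.

Lemma Dsum (a b c X : R * R) : Dt X b c + Dt X c a + Dt X a b = Dt a b c.
Proof. rewrite /Dt; ring. Qed.
Lemma Dcomb1 (a b c X : R * R) :
  Dt X b c * a.1 + Dt X c a * b.1 + Dt X a b * c.1 = X.1 * Dt a b c.
Proof. rewrite /Dt; ring. Qed.
Lemma Dcomb2 (a b c X : R * R) :
  Dt X b c * a.2 + Dt X c a * b.2 + Dt X a b * c.2 = X.2 * Dt a b c.
Proof. rewrite /Dt; ring. Qed.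

Lemma frac3 (a b c x y z d : R) :
  a / d * x + b / d * y + c / d * z = (a * x + b * y + c * z) / d.
Proof. ring. Qed.

Lemma lam_sum t X : \sum_i lam t i X = 1.
Proof.
rewrite sum3 /lam -!mulrDl nxo2 -/o1 -/o2 Dsum.
exact: divff (Dnz' t).
Qed.

Lemma lam_comb1 t X : \sum_i lam t i X * (P t i).1 = X.1.
Proof.
rewrite sum3 /lam nxo2 -/o1 -/o2 frac3 Dcomb1.
by apply: mulfK; apply: Dnz.
Qed.

Lemma lam_comb2 t X : \sum_i lam t i X * (P t i).2 = X.2.
Proof.
rewrite sum3 /lam nxo2 -/o1 -/o2 frac3 Dcomb2.
by apply: mulfK; apply: Dnz.
Qed.

Lemma fin_max (U : finType) (F : U -> R) (S : {set U}) t0 :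
  t0 \in S -> exists2 t, t \in S & forall t', t' \in S -> F t' <= F t.
Proof.
move=> H; case: (@Order.TotalTheory.arg_maxP _ _ U t0 (mem S) F H) => t tS Ht.
by exists t.
Qed.

Lemma sum_ind (G : V -> R) (a : V) : \sum_v (a == v)%:R * G v = G a.
Proof.
rewrite (bigD1 a) //= eqxx mul1r big1 ?addr0 // => v /negPf.
by rewrite eq_sym => ->; rewrite mul0r.
Qed.

Lemma sum_ind3 (G : 'I_3 -> R) (a : 'I_3) : \sum_j (a == j)%:R * G j = G a.
Proof.
rewrite (bigD1 a) //= eqxx mul1r big1 ?addr0 // => v /negPf.
by rewrite eq_sym => ->; rewrite mul0r.
Qed.

Lemma lam_of_comb t (al : 'I_3 -> R) i : \sum_j al j = 1 ->
  lam t i (\sum_j al j * (P t j).1, \sum_j al j * (P t j).2) = al i.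
Proof.
move=> H1; rewrite lam_aff /= !mulr_sumr -[lx t i]mulr1 -H1 mulr_sumr -!big_split /=.
rewrite -(sum_ind3 al i); apply: eq_bigr => j _.
rewrite -(lam_vert t i j) lam_aff; ring.
Qed.

Lemma sumV_tri t (w G : V -> R) : (forall v, v \notin tvset tv t -> w v = 0) ->
  \sum_v w v * G v = \sum_i w (tv t i) * G (tv t i).
Proof.
move=> Hw; rewrite (bigID (mem (tvset tv t))) /= [X in _ + X]big1 ?addr0; last first.
  by move=> v Hv; rewrite Hw ?mul0r.
rewrite /tvset big_imset //=.
by move=> i j _ _; apply: tv_inj.
Qed.

Lemma conv_lam t (S : {set V}) x : S \subset tvset tv t -> conv p S x ->
  forall i, 0 <= lam t i x /\ (tv t i \notin S -> lam t i x = 0).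
Proof.
move=> HS [w [w0 [wS [w1 ->]]]].
have wT : forall v, v \notin tvset tv t -> w v = 0.
  move=> v Hv; apply: wS; apply/negP => vS; move/negP: Hv; apply; by move/fintype.subsetP: HS; apply.
have E1 : \sum_v w v * (p v).1 = \sum_i w (tv t i) * (P t i).1 by apply: sumV_tri.
have E2 : \sum_v w v * (p v).2 = \sum_i w (tv t i) * (P t i).2 by apply: sumV_tri.
have E0 : \sum_i w (tv t i) = 1.
  rewrite -w1; transitivity (\sum_v w v * 1).
    by rewrite (@sumV_tri t w (fun _ => 1)) //; apply: eq_bigr => i _; rewrite mulr1.
  by apply: eq_bigr => v _; rewrite mulr1.
move=> i; rewrite E1 E2 lam_of_comb //; split => //.
exact: wS.
Qed.

Lemma tri_lamP t x : closed_tri p tv t x <-> forall i, 0 <= lam t i x.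
Proof.
split; first by move=> H i; case: (conv_lam (subxx _) H i).
move=> H; exists (fun v => \sum_i (tv t i == v)%:R * lam t i x); split.
  by move=> v; apply: sumr_ge0 => i _; apply: mulr_ge0 => //; apply: ler0n.
split.
  move=> v Hv; apply: big1 => i _; case: eqP => [HE|_]; last by rewrite mul0r.
  by move: Hv; rewrite -HE /tvset imset_f.
have Ex : forall G : V -> R, \sum_v (\sum_i (tv t i == v)%:R * lam t i x) * G v
    = \sum_i lam t i x * G (tv t i).
  move=> G; rewrite (eq_bigr (fun v => \sum_i (tv t i == v)%:R * lam t i x * G v)).
    rewrite exchange_big /=; apply: eq_bigr => i _.
    rewrite (eq_bigr (fun v => (tv t i == v)%:R * (lam t i x * G v))).
      by rewrite (sum_ind (fun v => lam t i x * G v)).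
    by move=> v _; rewrite mulrA.
  by move=> v _; rewrite mulr_suml.
split.
  by rewrite (eq_bigr (fun v => (\sum_i (tv t i == v)%:R * lam t i x) * 1)) ?Ex;
    [ rewrite (eq_bigr (fun i => lam t i x)) ?lam_sum // => i _; rewrite mulr1
    | move=> v _; rewrite mulr1].
by rewrite !Ex lam_comb1 lam_comb2 -surjective_pairing.
Qed.

Lemma lam_affcomb t (al : 'I_3 -> R) (Q : 'I_3 -> R * R) k : \sum_j al j = 1 ->
  lam t k (\sum_j al j * (Q j).1, \sum_j al j * (Q j).2)
  = \sum_j al j * lam t k (Q j).
Proof.
move=> H1; rewrite lam_aff /= !mulr_sumr -[lx t k]mulr1 -H1 mulr_sumr -!big_split /=.
by apply: eq_bigr => j _; rewrite lam_aff; ring.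
Qed.

Lemma card_tvset t : #|tvset tv t| = 3.
Proof.
rewrite /tvset card_imset ?card_ord //; exact: tv_inj.
Qed.

Lemma tvset_all3 t i v : v \in tvset tv t ->
  v = tv t i \/ v = tv t (nx i) \/ v = tv t (nx (nx i)).
Proof.
by move=> /imsetP [k _ ->]; case: (all3 i k) => [->|[->|->]]; tauto.
Qed.

Lemma tv_in t i : tv t i \in tvset tv t.
Proof. exact: imset_f. Qed.

Lemma small_s (g1 g2 : R) : let s := 1 / (2 + 2 * `|g1| + 2 * `|g2|) in
  0 < s /\ s <= 1/2 /\ 0 <= (1 - s) / 2 + s * g1 /\ 0 <= (1 - s) / 2 + s * g2.
Proof.
move=> s.
have m0 : 0 < 2 + 2 * `|g1| + 2 * `|g2| by have := normr_ge0 g1; have := normr_ge0 g2; lra.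
have sm : s * (2 + 2 * `|g1| + 2 * `|g2|) = 1 by rewrite /s mul1r mulVf // gt_eqF.
have s0 : 0 < s by rewrite /s divr_gt0.
have h1 := ler_norm g1; have h1' := ler_normr g1.
have a1 : - g1 <= `|g1| by rewrite -normrN ler_norm.
have a2 : - g2 <= `|g2| by rewrite -normrN ler_norm.
have n1 := normr_ge0 g1; have n2 := normr_ge0 g2.
split => //; split; first nra.
split; nra.
Qed.

Lemma Dt_cyc (a b c : R * R) : Dt c a b = Dt a b c.
Proof. rewrite /Dt; ring. Qed.

Variable sg : R.
Hypothesis Hsg : forall t, 0 < sg * D t.
Hypothesis Hconf : conforming p tv.

Lemma Dratio t1 t2 : 0 < D t1 / D t2.
Proof.
have h1 := Hsg t1; have h2 := Hsg t2.
have sg0 : sg != 0 by apply/eqP => HE; move: h1; rewrite HE mul0r ltxx.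
have -> : D t1 / D t2 = (sg * D t1) / (sg * D t2).
  by rewrite invfM mulrACA divff // mul1r.
by apply: divr_gt0.
Qed.

Lemma shared_notin t1 t2 i j : tv t1 i = tv t2 j -> tv t1 (nx i) = tv t2 (nx j) ->
  t1 != t2 -> tv t1 (nx (nx i)) \notin tvset tv t1 :&: tvset tv t2.
Proof.
move=> HA HB Hne; apply/negP => Hin.
have [Hcard _] := Hconf Hne.
have : tvset tv t1 \subset tvset tv t1 :&: tvset tv t2.
  apply/fintype.subsetP => v Hv; case: (tvset_all3 i Hv) => [->|[->|->]] //;
  rewrite inE tv_in /=; [rewrite HA | rewrite HB]; exact: tv_in.
move/subset_leq_card; rewrite card_tvset => H3.
by have := leq_trans H3 Hcard.
Qed.

Lemma same_pair t1 t2 i j : tv t1 i = tv t2 j -> tv t1 (nx i) = tv t2 (nx j) -> t1 = t2.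
Proof.
move=> HA HB; case: (eqVneq t1 t2) => // Hne; exfalso.
have [_ Heq] := Hconf Hne.
pose C := P t1 (nx (nx i)).
pose g1 := lam t2 j C; pose g2 := lam t2 (nx j) C.
pose s := 1 / (2 + 2 * `|g1| + 2 * `|g2|).
have [s0 [sh [n1 n2]]] : 0 < s /\ s <= 1/2 /\ 0 <= (1 - s) / 2 + s * g1 /\
   0 <= (1 - s) / 2 + s * g2 by exact: small_s.
pose al (k : 'I_3) := if k == nx (nx i) then s else (1 - s) / 2.
have Hal : \sum_k al k = 1.
  rewrite (sum3i _ i) /al; simpl3; lra.
pose y := (\sum_k al k * (P t1 k).1, \sum_k al k * (P t1 k).2).
have Hy1 : forall k, lam t1 k y = al k by move=> k; apply: lam_of_comb.
have Hy2 : closed_tri p tv t2 y.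
  apply/tri_lamP => k; rewrite /y lam_affcomb // (sum3i _ i) /al; simpl3; rewrite HA HB !lam_vert.
  have Hg : 0 < lam t2 (nx (nx j)) C.
    rewrite /lam !nx3 /C -HA -HB Dt_cyc Dt_rot; exact: Dratio.
  case: (all3 j k) => [->|[->|->]].
  - simpl3; rewrite -/C -/g1; lra.
  - simpl3; rewrite -/C -/g2; lra.
  - simpl3; rewrite -/C.
    have : 0 < s * lam t2 (nx (nx j)) C by apply: mulr_gt0.
    lra.
have Hy1' : closed_tri p tv t1 y by apply/tri_lamP => k; rewrite Hy1 /al; case: ifP => _; lra.
have Hc : conv p (tvset tv t1 :&: tvset tv t2) y by rewrite -Heq; split.
have [_ H0] := conv_lam (subsetIl _ _) Hc (nx (nx i)).
move: (H0 (shared_notin HA HB Hne)); rewrite Hy1 /al eqxx => HE.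
by move: s0; rewrite HE ltxx.
Qed.

Lemma set2_eq (U : finType) (x y a b : U) : [set x; y] = [set a; b] -> a != b ->
  (x = a /\ y = b) \/ (x = b /\ y = a).
Proof.
move=> HE Hab.
have ha : a \in [set x; y] by rewrite HE !inE eqxx.
have hb : b \in [set x; y] by rewrite HE !inE eqxx orbT.
have hx : x \in [set a; b] by rewrite -HE !inE eqxx.
have hy : y \in [set a; b] by rewrite -HE !inE eqxx orbT.
move: ha hb hx hy; rewrite !inE => /orP[/eqP ha|/eqP ha] /orP[/eqP hb|/eqP hb]
  /orP[/eqP hx|/eqP hx] /orP[/eqP hy|/eqP hy]; subst; try by [left|right].
all: by move: Hab; rewrite eqxx.
Qed.

Lemma posP t e : reflect (exists k, src e = tv t k /\ dst e = tv t (nx k)) (pos_side tv src dst t e).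
Proof.
apply: (iffP existsP) => [[k /andP[/eqP h1 /eqP h2]]|[k [h1 h2]]]; exists k => //.
by rewrite h1 h2 !eqxx.
Qed.

Lemma negP' t e : reflect (exists k, dst e = tv t k /\ src e = tv t (nx k)) (neg_side tv src dst t e).
Proof.
apply: (iffP existsP) => [[k /andP[/eqP h1 /eqP h2]]|[k [h1 h2]]]; exists k => //.
by rewrite h1 h2 !eqxx.
Qed.

Lemma pos_neg_excl t e : pos_side tv src dst t e -> neg_side tv src dst t e -> False.
Proof.
move=> /posP [k [h1 h2]] /negP' [m [h3 h4]].
have E1 : k = nx m by apply: (@tv_inj t); rewrite -h1 h4.
have E2 : nx k = m by apply: (@tv_inj t); rewrite -h2 h3.
have : nx (nx m) = m by rewrite -E1 E2.
by move/eqP; rewrite nx_neq2.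
Qed.

Lemma delta_pos t e : pos_side tv src dst t e -> delta R tv src dst t e = 1.
Proof. by rewrite /delta => ->. Qed.
Lemma delta_neg t e : neg_side tv src dst t e -> delta R tv src dst t e = -1.
Proof.
move=> hn; rewrite /delta hn; case: ifP => // hp; exfalso; exact: (pos_neg_excl hp hn).
Qed.
Lemma delta_out t e : ~~ side tv src dst t e -> delta R tv src dst t e = 0.
Proof. by rewrite /side negb_or => /andP[/negPf h1 /negPf h2]; rewrite /delta h1 h2. Qed.

Lemma pos_pos t1 t2 e : pos_side tv src dst t1 e -> pos_side tv src dst t2 e -> t1 = t2.
Proof.
move=> /posP [k [h1 h2]] /posP [m [h3 h4]]; apply: (same_pair (i:=k) (j:=m)).
  by rewrite -h1 h3.
by rewrite -h2 h4.
Qed.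

Lemma neg_neg t1 t2 e : neg_side tv src dst t1 e -> neg_side tv src dst t2 e -> t1 = t2.
Proof.
move=> /negP' [k [h1 h2]] /negP' [m [h3 h4]]; apply: (same_pair (i:=k) (j:=m)).
  by rewrite -h1 h3.
by rewrite -h2 h4.
Qed.

Lemma side_eq t1 t2 e : side tv src dst t1 e -> side tv src dst t2 e ->
  pos_side tv src dst t1 e = pos_side tv src dst t2 e -> t1 = t2.
Proof.
rewrite /side => /orP[h1|h1] /orP[h2|h2]; rewrite ?h1 ?h2.
- by move=> _; apply: pos_pos h1 h2.
- by case: (boolP (pos_side tv src dst t2 e)) => // h3 _; apply: pos_pos h1 h3.
- by case: (boolP (pos_side tv src dst t1 e)) => // h3 _; apply: pos_pos h3 h2.
- by move=> _; apply: neg_neg h1 h2.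
Qed.

Local Notation sideS e := [set t | side tv src dst t e].

Lemma card_side_le2 e : (#|sideS e| <= 2)%N.
Proof.
rewrite -(@card_in_imset _ _ (fun t => pos_side tv src dst t e)).
  by apply: leq_trans (max_card _) _; rewrite card_bool.
move=> t1 t2; rewrite !inE => h1 h2; exact: side_eq.
Qed.

Lemma internal_two e : internal tv src dst e ->
  exists t1 t2, t1 != t2 /\ sideS e = [set t1; t2].
Proof. by move/cards2P. Qed.

Lemma nonint_unique e t t' : ~~ internal tv src dst e -> side tv src dst t e ->
  side tv src dst t' e -> t = t'.
Proof.
move=> Hn h1 h2; case: (eqVneq t t') => // Hne; exfalso; move/negP: Hn; apply.
rewrite /internal eqn_leq card_side_le2 /=.
apply: (@leq_trans #|[set t; t']|); first by rewrite cards2 Hne.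
by apply: subset_leq_card; apply/fintype.subsetP => x; rewrite !inE => /orP[]/eqP->.
Qed.

Lemma side_of_two t e j k : evset src dst e = [set tv t j; tv t k] -> j != k ->
  side tv src dst t e.
Proof.
move=> HE Hjk; have Hab : tv t j != tv t k by apply: contra Hjk => /eqP/tv_inj ->.
case: (set2_eq HE Hab) => [[hs hd]|[hs hd]]; rewrite /side.
- case: (all3 j k) => [h|[h|h]]; first by move: Hjk; rewrite h eqxx.
    by apply/orP; left; apply/posP; exists j; rewrite hs hd h.
  by apply/orP; right; apply/negP'; exists k; rewrite hs hd h nx3.
- case: (all3 j k) => [h|[h|h]]; first by move: Hjk; rewrite h eqxx.
    by apply/orP; right; apply/negP'; exists j; rewrite hs hd h.
  by apply/orP; left; apply/posP; exists k; rewrite hs hd h nx3.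
Qed.

Lemma side_evset t e : side tv src dst t e ->
  exists k, evset src dst e = [set tv t k; tv t (nx k)].
Proof.
rewrite /side /evset => /orP[/posP[k [h1 h2]]|/negP'[k [h1 h2]]]; exists k.
  by rewrite h1 h2.
by rewrite h1 h2 finset.setUC.
Qed.

Lemma sum_delta e (F : T -> R) t1 t2 : t1 != t2 -> sideS e = [set t1; t2] ->
  \sum_t F t * delta R tv src dst t e = delta R tv src dst t1 e * (F t1 - F t2)
  /\ (delta R tv src dst t1 e = 1 \/ delta R tv src dst t1 e = -1).
Proof.
move=> Hne HS.
have s1 : side tv src dst t1 e by move: (set21 t1 t2); rewrite -HS inE.
have s2 : side tv src dst t2 e by move: (set22 t1 t2); rewrite -HS inE.
have Hd : delta R tv src dst t2 e = - delta R tv src dst t1 e /\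
   (delta R tv src dst t1 e = 1 \/ delta R tv src dst t1 e = -1).
  move: (s1) (s2); rewrite /side => /orP[p1|n1] /orP[p2|n2].
  - by move: Hne; rewrite (pos_pos p1 p2) eqxx.
  - by rewrite (delta_pos p1) (delta_neg n2); split; [|left].
  - by rewrite (delta_neg n1) (delta_pos p2) opprK; split; [|right].
  - by move: Hne; rewrite (neg_neg n1 n2) eqxx.
split; last by case: Hd.
rewrite (bigD1 t1) //= (bigD1 t2) /=; last by rewrite eq_sym.
rewrite big1 ?addr0; last first.
  move=> t /andP[h1 h2]; rewrite delta_out ?mulr0 //.
  apply/negP => hs; have : t \in sideS e by rewrite inE.
  by rewrite HS !inE (negPf h1) (negPf h2).
by case: Hd => -> _; ring.
Qed.

Hypothesis Hedges : mesh_edges tv src dst.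

Lemma adj_other e t i a b : internal tv src dst e -> evset src dst e = [set a; b] ->
  tv t i = a -> tv t (nx i) = b ->
  exists t', [/\ t' != t, side tv src dst t' e & exists k, tv t' k = b /\ tv t' (nx k) = a].
Proof.
move=> Hint HE ha hb.
have st : side tv src dst t e by apply: (side_of_two (j:=i) (k:=nx i)); rewrite ?ha ?hb // eq_sym nx_neq1.
have [t1 [t2 [Hne HS]]] := internal_two Hint.
have tS : t \in sideS e by rewrite inE.
have [t' [Ht' St']] : exists t', t' != t /\ t' \in sideS e.
  move: tS; rewrite HS !inE => /orP[/eqP ->|/eqP ->].
    by exists t2; rewrite eq_sym Hne !inE eqxx orbT.
  by exists t1; rewrite Hne !inE eqxx.
move: St'; rewrite inE => St'; exists t'; split => //.
have [k Ek] := side_evset St'.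
have Hab : a != b by rewrite -ha -hb; apply/negP => /eqP/tv_inj/eqP; rewrite eq_sym nx_neq1.
move: Ek; rewrite HE => /esym Ek.
case: (set2_eq Ek Hab) => [[h1 h2]|[h1 h2]]; last by exists k.
by move: Ht'; rewrite (@same_pair t t' i k) ?eqxx // ?h1 ?h2.
Qed.

Definition vsub (a b : R * R) := (a.1 - b.1, a.2 - b.2).
Definition dot (a b : R * R) := a.1 * b.1 + a.2 * b.2.

Lemma ex_small (U : finType) (Q : U -> R -> Prop) :
  (forall u, exists2 e, 0 < e & forall s, 0 < s -> s <= e -> Q u s) ->
  exists2 e, 0 < e & forall u s, 0 < s -> s <= e -> Q u s.
Proof.
move=> H.
suff : forall l : seq U, exists2 e, 0 < e & forall u s, u \in l -> 0 < s -> s <= e -> Q u s.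
  by move=> /(_ (enum U)) [e e0 He]; exists e => // u s; apply: He; rewrite mem_enum.
elim=> [|u l [e2 e20 IH]]; first by exists 1.
have [e1 e10 H1] := H u.
exists (Num.min e1 e2); first by rewrite lt_min e10 e20.
move=> u' s; rewrite in_cons le_min => /orP[/eqP ->|ul] s0 /andP[h1 h2].
  exact: H1.
exact: IH.
Qed.

Lemma lam_shiftg t i (x d : R * R) s :
  lam t i (x.1 + s * d.1, x.2 + s * d.2) = lam t i x + s * (ly t i * d.1 + lz t i * d.2).
Proof. rewrite !lam_aff /=; ring. Qed.

Lemma lam_dir t i (X Y : R * R) :
  ly t i * (Y.1 - X.1) + lz t i * (Y.2 - X.2) = lam t i Y - lam t i X.
Proof. rewrite !lam_aff; ring. Qed.

Lemma ball_small (x d : R * R) (eps : R) : 0 < eps ->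
  exists2 e, 0 < e & forall s, 0 < s -> s <= e -> ball x eps (x.1 + s * d.1, x.2 + s * d.2).
Proof.
move=> ep; pose K := 1 + `|d.1| + `|d.2|.
have K0 : 0 < K by rewrite /K; have := normr_ge0 d.1; have := normr_ge0 d.2; lra.
exists (eps / (2 * K)); first by apply: divr_gt0 => //; apply: mulr_gt0.
move=> s s0 se.
have sK : s * K <= eps / 2.
  have : s * (2 * K) <= eps by rewrite -ler_pdivlMr //; apply: mulr_gt0.
  lra.
have n1 := normr_ge0 d.1; have n2 := normr_ge0 d.2.
split; rewrite /= -ball_normE /= opprD addNKr normrN normrM gtr0_norm //.
  have : s * `|d.1| <= s * K by apply: ler_wpM2l; [apply: ltW | rewrite /K; lra].
  lra.
have : s * `|d.2| <= s * K by apply: ler_wpM2l; [apply: ltW | rewrite /K; lra].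
lra.
Qed.

Local Notation U := [set x | exists t, closed_tri p tv t x].

Lemma tri_closure t x : closed_tri p tv t x -> closure (Omega p tv) x.
Proof.
move/tri_lamP => Hx B /nbhs_ballP [e /= e0 HB].
pose g := (\sum_j (1/3 : R) * (P t j).1, \sum_j (1/3 : R) * (P t j).2).
have g3 : forall i, lam t i g = 1/3.
  move=> i; apply: lam_of_comb; rewrite sum3; lra.
pose d := (g.1 - x.1, g.2 - x.2).
have [e1 e10 He1] := ball_small x d e0.
pose s := Num.min e1 1.
have s0 : 0 < s by rewrite lt_min e10 ltr01.
have s1 : s <= 1 by rewrite ge_min lexx orbT.
have se : s <= e1 by rewrite ge_min lexx.
pose z := (x.1 + s * d.1, x.2 + s * d.2).
have Hz : forall i, lam t i z = (1 - s) * lam t i x + s / 3.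
  move=> i; rewrite /z lam_shiftg /d lam_dir g3; lra.
have zB : B z by apply: HB; apply: He1.
exists z; split => //.
pose M := \sum_i (`|ly t i| + `|lz t i|).
have M0 : 0 <= M by apply: sumr_ge0 => i _; apply: addr_ge0.
pose r := s / (3 * (1 + M)).
have r0 : 0 < r by apply: divr_gt0 => //; apply: mulr_gt0 => //; lra.
apply/nbhs_ballP; exists r => // y Hy.
exists t; apply/tri_lamP => i.
have Hyz : y = (z.1 + 1 * (vsub y z).1, z.2 + 1 * (vsub y z).2).
  by rewrite /vsub /= !mul1r !subrKC -surjective_pairing.
have [b1 b2] : ball z.1 r y.1 /\ ball z.2 r y.2 by [].
rewrite -ball_normE /= in b1; rewrite -ball_normE /= in b2.
have Mi : `|ly t i| + `|lz t i| <= M.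
  by rewrite /M (bigD1 i) //= lerDl; apply: sumr_ge0 => j _; apply: addr_ge0.
have rM : (1 + M) * r = s / 3.
  have hM : 1 + M != 0 by rewrite lt0r_neq0 //; lra.
  by rewrite /r; field.
have b1' : `|(vsub y z).1| <= r by rewrite /vsub /= distrC ltW.
have b2' : `|(vsub y z).2| <= r by rewrite /vsub /= distrC ltW.
have E1 : `|ly t i * (vsub y z).1| <= `|ly t i| * r by rewrite normrM ler_wpM2l.
have E2 : `|lz t i * (vsub y z).2| <= `|lz t i| * r by rewrite normrM ler_wpM2l.
have F1' : - (ly t i * (vsub y z).1) <= `|ly t i * (vsub y z).1| by rewrite -normrN ler_norm.
have F2' : - (lz t i * (vsub y z).2) <= `|lz t i * (vsub y z).2| by rewrite -normrN ler_norm.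
have HA : `|ly t i| * r + `|lz t i| * r <= M * r.
  by rewrite -mulrDl; apply: ler_wpM2r; [apply: ltW | exact: Mi].
have HrM : r + M * r = s / 3 by rewrite -rM mulrDl mul1r.
have Hp : 0 <= (1 - s) * lam t i x by apply: mulr_ge0 => //; lra.
rewrite Hyz lam_shiftg mul1r Hz.
lra.
Qed.

Lemma edge_not_interior t k0 e x : ~~ internal tv src dst e ->
  evset src dst e = [set tv t k0; tv t (nx k0)] -> side tv src dst t e ->
  0 < lam t k0 x -> 0 < lam t (nx k0) x -> lam t (nx (nx k0)) x = 0 -> ~ Omega p tv x.
Proof.
move=> ni Ee st h0 h1 h2 /nbhs_ballP [eps /= eps0 Heps].
pose C := P t (nx (nx k0)).
pose d := (x.1 - C.1, x.2 - C.2).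
pose y s := (x.1 + s * d.1, x.2 + s * d.2).
have Ly : forall t' j s, lam t' j (y s) = lam t' j x + s * (lam t' j x - lam t' j C).
  by move=> t' j s'; rewrite /y lam_shiftg /d lam_dir.
have [eb eb0 Hb] := ball_small x d eps0.
have [e0 e00 He] : exists2 e0, 0 < e0 & forall t' s, 0 < s -> s <= e0 ->
    (closed_tri p tv t' x \/ ~ closed_tri p tv t' (y s)) /\ ball x eps (y s).
  apply: ex_small => t'.
  case: (pselect (closed_tri p tv t' x)) => Hx.
    by exists eb => // s s0 se; split; [left | exact: Hb].
  have [j hj] : exists j, lam t' j x < 0.
    apply: contrapT => hn; apply: Hx; apply/tri_lamP => j; rewrite leNgt; apply/negP => hj.
    by apply: hn; exists j.
  pose a := lam t' j x; pose c := lam t' j C.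
  have n0 := normr_ge0 (a - c).
  exists (Num.min eb (- a / (1 + `|a - c|))).
    by rewrite lt_min eb0 /=; apply: divr_gt0; rewrite /a; lra.
  move=> s s0; rewrite le_min => /andP[se1 se2]; split; last exact: Hb.
  right; move/tri_lamP => /(_ j); rewrite Ly -/a -/c.
  have : s * (1 + `|a - c|) <= - a by rewrite -ler_pdivlMr //; lra.
  have : s * (a - c) <= s * `|a - c| by rewrite ler_wpM2l ?ler_norm //; apply: ltW.
  have ha : a < 0 by [].
  lra.
have [Hx' Hball] := He t e0 e00 (lexx _).
have [t' Ht'] : exists t', closed_tri p tv t' (y e0) by apply: Heps.
have [/= Hxt'|//] : closed_tri p tv t' x \/ ~ closed_tri p tv t' (y e0) by case: (He t' e0 e00 (lexx _)).
case: (eqVneq t t') => [Htt|Hne].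
  move: Ht'; rewrite -Htt => /tri_lamP /(_ (nx (nx k0))).
  rewrite Ly h2 /C lam_vert eqxx /= mulr1n; lra.
have [_ Heq] := Hconf Hne.
have Hc : conv p (tvset tv t :&: tvset tv t') x.
  rewrite -Heq; split => //; apply/tri_lamP => j.
  case: (all3 k0 j) => [->|[->|->]]; lra.
have inS : forall k, 0 < lam t k x -> tv t k \in tvset tv t'.
  move=> k hk; have [_ H0] := conv_lam (subsetIl _ _) Hc k.
  case: (boolP (tv t k \in tvset tv t :&: tvset tv t')) => [|/H0 hz].
    by rewrite inE => /andP[].
  by move: hk; rewrite hz ltxx.
have /imsetP [j0 _ E0] := inS _ h0.
have /imsetP [j1 _ E1] := inS _ h1.
have st' : side tv src dst t' e.
  apply: (side_of_two (j:=j0) (k:=j1)); first by rewrite -E0 -E1.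
  apply/negP => /eqP HE; move: E1; rewrite -HE -E0 => /tv_inj /eqP.
  by rewrite ?eq_nx1 ?nx_neq1.
by move: Hne; rewrite (nonint_unique ni st st') eqxx.
Qed.

Lemma segment_bdry e : ~~ internal tv src dst e ->
  (segment p src dst e `<=` bdry p tv)%classic.
Proof.
move=> ni x Sx.
have [He1 _] := Hedges; have [t st] := He1 e.
have [k0 Ee] := side_evset st.
have Hsub : evset src dst e \subset tvset tv t.
  by rewrite Ee; apply/fintype.subsetP => u; rewrite !inE => /orP[]/eqP ->; apply: tv_in.
have Hl := conv_lam Hsub Sx.
have Hn2 : tv t (nx (nx k0)) \notin evset src dst e.
  rewrite Ee !inE; apply/norP; split; apply/negP => /eqP /tv_inj /eqP.
    by rewrite nx_neq2.
  by rewrite nx_neq3.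
have hz : lam t (nx (nx k0)) x = 0 by case: (Hl (nx (nx k0))) => _; apply.
have Hx : closed_tri p tv t x by apply/tri_lamP => j; case: (Hl j).
split; first exact: tri_closure Hx.
move=> Ox; have := nbhs_interior Ox; move/nbhs_ballP => [eps /= eps0 Heps].
pose al (j : 'I_3) : R := if j == nx (nx k0) then 0 else 1/2.
have Hal : \sum_j al j = 1 by rewrite (sum3i _ k0) /al; simpl3; lra.
pose m := (\sum_j al j * (P t j).1, \sum_j al j * (P t j).2).
have Lm : forall j, lam t j m = al j by move=> j; apply: lam_of_comb.
pose d := (m.1 - x.1, m.2 - x.2).
have [eb eb0 Hb] := ball_small x d eps0.
pose s := Num.min eb (1/2).
have s0 : 0 < s by rewrite lt_min eb0; lra.
have s1 : s <= 1/2 by rewrite ge_min lexx orbT.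
have se : s <= eb by rewrite ge_min lexx.
pose x' := (x.1 + s * d.1, x.2 + s * d.2).
have Lx : forall j, lam t j x' = (1 - s) * lam t j x + s * al j.
  by move=> j; rewrite /x' lam_shiftg /d lam_dir Lm; ring.
have Ox' : Omega p tv x' by apply: Heps; apply: Hb.
apply: (edge_not_interior ni Ee st _ _ _ Ox').
- rewrite Lx /al; simpl3; have := (Hl k0).1.
  move=> h; have : 0 <= (1 - s) * lam t k0 x by apply: mulr_ge0 => //; lra.
  lra.
- rewrite Lx /al; simpl3; have := (Hl (nx k0)).1.
  move=> h; have : 0 <= (1 - s) * lam t (nx k0) x by apply: mulr_ge0 => //; lra.
  lra.
- by rewrite Lx hz /al eqxx; ring.
Qed.

Hypothesis Hpoly : polygonal_boundary p tv src dst.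

Section Vert.
Variable v : V.
Definition idx t := odflt o0 [pick i | tv t i == v].
Lemma idxP t : v \in tvset tv t -> tv t (idx t) = v.
Proof.
move=> /imsetP [i _ Ei]; rewrite /idx; case: pickP => [j /eqP //|].
by move/(_ i); rewrite Ei eqxx.
Qed.
Lemma idx_eq t k : tv t k = v -> idx t = k.
Proof. move=> h; apply: (@tv_inj t); rewrite h idxP // -h; exact: tv_in. Qed.

Definition ov t := tv t (nx (idx t)).
Definition nv t := tv t (nx (nx (idx t))).

Definition out_int t := exists e, evset src dst e = [set v; ov t] /\ internal tv src dst e.
Definition in_int t := exists e, evset src dst e = [set nv t; v] /\ internal tv src dst e.

Definition o' t := vsub (p (ov t)) (p v).
Definition n' t := vsub (p (nv t)) (p v).
Definition cov t (d : R * R) : bool :=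
  (0 <= sg * det2 d (n' t)) && (0 <= sg * det2 (o' t) d).

Lemma det_on t : v \in tvset tv t -> det2 (o' t) (n' t) = D t.
Proof.
move=> vt; rewrite -(Dt_rot t (idx t)) idxP //.
Qed.

Lemma det2_anti a b : det2 a b = - det2 b a.
Proof. rewrite /det2; ring. Qed.

Lemma ratio_ge0 x y : 0 <= sg * x -> 0 < sg * y -> 0 <= x / y.
Proof.
move=> hx hy.
have sg0 : sg != 0 by apply/eqP => HE; move: hy; rewrite HE mul0r ltxx.
have -> : x / y = (sg * x) / (sg * y).
  by rewrite invfM mulrACA divff // mul1r.
by apply: divr_ge0 => //; apply: ltW.
Qed.

Lemma Dt_shift1 (a b d : R * R) s :
  Dt (a.1 + s * d.1, a.2 + s * d.2) b a = s * det2 d (vsub b a).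
Proof. rewrite /Dt /det2 /vsub /=; ring. Qed.
Lemma Dt_shift2 (a b d : R * R) s :
  Dt (a.1 + s * d.1, a.2 + s * d.2) a b = s * det2 (vsub b a) d.
Proof. rewrite /Dt /det2 /vsub /=; ring. Qed.

Lemma lam_shift t s d : v \in tvset tv t ->
  lam t (nx (idx t)) ((p v).1 + s * d.1, (p v).2 + s * d.2) = s * (det2 d (n' t) / D t) /\
  lam t (nx (nx (idx t))) ((p v).1 + s * d.1, (p v).2 + s * d.2) = s * (det2 (o' t) d / D t).
Proof.
move=> vt; rewrite /lam !nx3 idxP // -/(nv t) -/(ov t) Dt_shift1 Dt_shift2 !mulrA.
by split.
Qed.

Lemma overlap t t2 : v \in tvset tv t -> v \in tvset tv t2 -> t != t2 ->
  cov t ((o' t2).1 + (n' t2).1, (o' t2).2 + (n' t2).2) -> False.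
Proof.
move=> vt vt2 Hne /andP[c1 c2].
set d := (_, _) in c1 c2.
pose a := det2 d (n' t) / D t; pose b := det2 (o' t) d / D t.
have a0 : 0 <= a by apply: ratio_ge0.
have b0 : 0 <= b by apply: ratio_ge0.
pose s := 1 / (4 * (1 + a + b)).
have m0 : 0 < 4 * (1 + a + b) by lra.
have sm : s * (4 * (1 + a + b)) = 1 by rewrite /s mul1r mulVf // gt_eqF.
have s0 : 0 < s by rewrite /s divr_gt0.
have sab : s * a + s * b <= 1 / 4 by nra.
have s14 : s <= 1 / 4 by nra.
pose y := ((p v).1 + s * d.1, (p v).2 + s * d.2).
have [l1 l2] := lam_shift s d vt.
have Hsum := lam_sum t y; rewrite (sum3i _ (idx t)) l1 l2 -/a -/b in Hsum.
have Ht : closed_tri p tv t y.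
  apply/tri_lamP => k; case: (all3 (idx t) k) => [->|[->|->]].
  - have -> : lam t (idx t) y = 1 - s * a - s * b by lra.
    lra.
  - by rewrite l1 -/a; apply: mulr_ge0 => //; apply: ltW.
  - by rewrite l2 -/b; apply: mulr_ge0 => //; apply: ltW.
have [m1 m2] := lam_shift s d vt2.
have Hd2 : det2 d (n' t2) = D t2 by rewrite -det_on // /d /det2 /=; ring.
have Hd3 : det2 (o' t2) d = D t2 by rewrite -det_on // /d /det2 /=; ring.
rewrite Hd2 divff ?Dnz // mulr1 in m1.
rewrite Hd3 divff ?Dnz // mulr1 in m2.
have Hsum2 := lam_sum t2 y; rewrite (sum3i _ (idx t2)) m1 m2 in Hsum2.
have Hpos : forall k, 0 < lam t2 k y.
  move=> k; case: (all3 (idx t2) k) => [->|[->|->]]; rewrite ?m1 ?m2 //; lra.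
have Ht2 : closed_tri p tv t2 y by apply/tri_lamP => k; apply: ltW.
have [Hcard Heq] := Hconf Hne.
have Hc : conv p (tvset tv t :&: tvset tv t2) y by rewrite -Heq; split.
have [k Hk] : exists k, tv t2 k \notin tvset tv t :&: tvset tv t2.
  apply: contrapT => Hn.
  have : tvset tv t2 \subset tvset tv t :&: tvset tv t2.
    apply/fintype.subsetP => u /imsetP [k _ ->]; apply/negPn/negP => hk.
    by apply: Hn; exists k.
  move/subset_leq_card; rewrite card_tvset => H3.
  by have := leq_trans H3 Hcard.
have [_ H0] := conv_lam (subsetIr _ _) Hc k.
by move: (Hpos k); rewrite H0 // ltxx.
Qed.

Section Kclass.
Variable K : {set T}.
Hypothesis Kv : forall t, t \in K -> v \in tvset tv t.
Hypothesis Kclosed : forall t t' e, internal tv src dst e -> side tv src dst t e ->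
  side tv src dst t' e -> v \in evset src dst e -> (t \in K) = (t' \in K).

Lemma succK t : t \in K -> out_int t -> exists t', t' \in K /\ nv t' = ov t.
Proof.
move=> tK [e [HE Hint]].
have [t' [Hne st' [k [h1 h2]]]] := adj_other Hint HE (idxP (Kv tK)) erefl.
have st : side tv src dst t e.
  apply: (side_of_two (j:=idx t) (k:=nx (idx t))); first by rewrite idxP ?Kv.
  by rewrite eq_sym nx_neq1.
have vt' : v \in tvset tv t' by rewrite -h2 tv_in.
have t'K : t' \in K by rewrite -(Kclosed Hint st st') // HE set21.
exists t'; split => //.
by rewrite /nv (idx_eq h2) nx3.
Qed.

Lemma predK t : t \in K -> in_int t -> exists t', t' \in K /\ ov t' = nv t.
Proof.
move=> tK [e [HE Hint]].
have hv : tv t (nx (nx (nx (idx t)))) = v by rewrite nx3 idxP ?Kv.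
have [t' [Hne st' [k [h1 h2]]]] := adj_other Hint HE erefl hv.
have st : side tv src dst t e.
  apply: (side_of_two (j:=nx (nx (idx t))) (k:=idx t)); first by rewrite idxP ?Kv.
  by rewrite nx_neq2.
have vt' : v \in tvset tv t' by rewrite -h1 tv_in.
have t'K : t' \in K by rewrite -(Kclosed Hint st st') // HE set22.
exists t'; split => //.
by rewrite /ov (idx_eq h1).
Qed.


Lemma mono_q (d o n : R * R) : 0 < d.1 ^+ 2 + d.2 ^+ 2 -> 0 < sg * det2 o n ->
  0 < det2 d o * det2 d n ->
  sg * (dot d n / det2 d n) < sg * (dot d o / det2 d o).
Proof.
move=> Hd Hon Hab.
have hA : det2 d o != 0 by apply/eqP => h; move: Hab; rewrite h mul0r ltxx.
have hB : det2 d n != 0 by apply/eqP => h; move: Hab; rewrite h mulr0 ltxx.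
rewrite -subr_gt0.
have -> : sg * (dot d o / det2 d o) - sg * (dot d n / det2 d n)
  = (sg * det2 o n) * (d.1 ^+ 2 + d.2 ^+ 2) / (det2 d o * det2 d n).
  rewrite /dot /det2 in hA hB *; field; exact/andP.
by apply: divr_gt0 => //; apply: mulr_gt0.
Qed.

Lemma sq_pos (c x : R) : 0 < (c * x) * (c * x) -> c != 0.
Proof. by apply: contraTneq => ->; rewrite !mul0r ltxx. Qed.

Lemma cover : (forall t, t \in K -> out_int t) -> forall t0, t0 \in K ->
  forall d : R * R, 0 < d.1 ^+ 2 + d.2 ^+ 2 -> exists2 t, t \in K & cov t d.
Proof.
move=> Hout t0 t0K d Hd.
case: (boolP [exists t in K, cov t d]) => [/existsP [t /andP [tK c]]|Hn]; first by exists t.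
exfalso.
have Hnc : forall t, t \in K -> sg * det2 d (n' t) < 0 \/ 0 < sg * det2 d (o' t).
  move=> t tK; have : ~~ cov t d.
    by apply: contra Hn => c; apply/existsP; exists t; rewrite tK c.
  rewrite /cov negb_and -!ltNge => /orP[h|h]; [left | right] => //.
  by rewrite det2_anti mulrN oppr_gt0.
have Hsucc t : t \in K -> exists t', t' \in K /\ nv t' = ov t.
  by move=> tK; apply: succK tK (Hout t tK).
have Hn'o t t' : nv t' = ov t -> n' t' = o' t by rewrite /n' /o' => ->.
pose b := [exists t in K, 0 <= sg * det2 d (n' t)].
pose S := if b then [set t in K | 0 < sg * det2 d (n' t)] else K.
pose eps : R := if b then 1 else -1.
have SK : forall t, t \in S -> t \in K.
  by move=> t; rewrite /S; case: ifP => // _; rewrite inE => /andP[].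
have Spos : forall t, t \in S -> 0 < eps * (sg * det2 d (n' t)).
  move=> t; rewrite /S /eps; case: ifP => hb; first by rewrite inE mul1r => /andP[].
  move=> tK; rewrite mulN1r oppr_gt0 ltNge; apply/negP => h.
  have : b by apply/existsP; exists t; rewrite tK h.
  by rewrite hb.
have Sclosed : forall t, t \in S -> exists t', t' \in S /\ nv t' = ov t.
  move=> t tS; have [t' [t'K E']] := Hsucc t (SK t tS); exists t'; split => //.
  move: tS; rewrite /S; case: ifP => hb; last by [].
  rewrite !inE t'K /= (Hn'o _ _ E') => /andP[tK hp].
  by case: (Hnc t tK) => // h; move: hp; rewrite ltNge ltW.
have [tS tSS] : exists t, t \in S.
  rewrite /S; case: ifP => hb; last by exists t0.
  move/existsP: hb => [t /andP[tK h]]; have [t' [t'K E']] := Hsucc t tK.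
  exists t'; rewrite inE t'K /= (Hn'o _ _ E').
  by case: (Hnc t tK) => // h'; move: h; rewrite leNgt h'.
pose F t := sg * (dot d (n' t) / det2 d (n' t)).
have [tm tmS Hmax] := fin_max F tSS.
have [t' [t'S E']] := Sclosed tm tmS.
have := Hmax t' t'S; rewrite /F (Hn'o _ _ E').
apply/negP; rewrite -ltNge; apply: mono_q => //.
  by rewrite det_on ?Hsg ?Kv ?SK.
have h1 := Spos t' t'S; have h2 := Spos tm tmS.
rewrite (Hn'o _ _ E') in h1.
have h12 := mulr_gt0 h1 h2.
have E12 : eps * (sg * det2 d (o' tm)) * (eps * (sg * det2 d (n' tm)))
   = (eps * sg) ^+ 2 * (det2 d (o' tm) * det2 d (n' tm)) by ring.
rewrite E12 in h12; rewrite ltNge; apply/negP => hz; move: h12.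
by rewrite ltNge mulr_ge0_le0 // sqr_ge0.
Qed.

Lemma caseB : (exists2 t, t \in K & ~ out_int t) -> exists2 t, t \in K & ~ in_int t.
Proof.
move=> [ta taK Hna]; apply: contrapT => Hn.
have Hall : forall t, t \in K -> in_int t.
  move=> t tK; apply: contrapT => h; apply: Hn; by exists t.
pose pr t := odflt t [pick t' in K | ov t' == nv t].
have prP : forall t, t \in K -> pr t \in K /\ ov (pr t) = nv t.
  move=> t tK; rewrite /pr; case: pickP => [t' /andP[h1 /eqP h2]|H] //=.
  have [t' [t'K h]] := predK tK (Hall t tK).
  by move: (H t'); rewrite t'K h eqxx.
have prI : {in K &, injective pr}.
  move=> t1 t2 t1K t2K E12.
  have [_ h1] := prP t1 t1K; have [_ h2] := prP t2 t2K.
  have hn : nv t1 = nv t2 by rewrite -h1 -h2 E12.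
  apply: (@same_pair _ _ (nx (nx (idx t1))) (nx (nx (idx t2)))) => //.
  by rewrite !nx3 !idxP ?Kv.
have Himg : pr @: K = K.
  apply/eqP; rewrite eqEcard card_in_imset // leqnn andbT.
  by apply/fintype.subsetP => u /imsetP [t tK ->]; case: (prP t tK).
have : ta \in pr @: K by rewrite Himg.
move=> /imsetP [t1 t1K E1]; have [_ h] := prP t1 t1K.
have [e [He Hint]] := Hall t1 t1K; apply: Hna; exists e; split => //.
by rewrite He -h -E1 finset.setUC.
Qed.

End Kclass.
Lemma side_vt t e u : side tv src dst t e -> u \in evset src dst e -> u \in tvset tv t.
Proof.
move=> /side_evset [k ->]; rewrite !inE => /orP[]/eqP ->; exact: tv_in.
Qed.

Lemma pv_segment e : v \in evset src dst e -> segment p src dst e (p v).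
Proof.
move=> ve; exists (fun u => (v == u)%:R); split; first by move=> u; apply: ler0n.
split; first by move=> u hu; case: eqP => // h; move: hu; rewrite -h ve.
split.
  transitivity (\sum_u (v == u)%:R * (fun _ => (1 : R)) u).
    by apply: eq_bigr => u _; rewrite mulr1.
  exact: sum_ind.
by rewrite !sum_ind -surjective_pairing.
Qed.


Lemma out_edge t : v \in tvset tv t -> ~ out_int t ->
  exists e, [/\ evset src dst e = [set v; ov t], ~~ internal tv src dst e & side tv src dst t e].
Proof.
move=> vt Hn; have [_ [He _]] := Hedges; have [e Ee] := He t (idx t).
rewrite idxP // in Ee; exists e; split => //.
  by apply/negP => hi; apply: Hn; exists e.
apply: (side_of_two (j:=idx t) (k:=nx (idx t))); first by rewrite idxP.
by rewrite eq_nx1.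
Qed.

Lemma in_edge t : v \in tvset tv t -> ~ in_int t ->
  exists e, [/\ evset src dst e = [set nv t; v], ~~ internal tv src dst e & side tv src dst t e].
Proof.
move=> vt Hn; have [_ [He _]] := Hedges; have [e Ee] := He t (nx (nx (idx t))).
rewrite nx3 idxP // in Ee; exists e; split => //.
  by apply/negP => hi; apply: Hn; exists e.
apply: (side_of_two (j:=nx (nx (idx t))) (k:=idx t)); first by rewrite idxP.
by rewrite nx_neq2.
Qed.

Lemma ov_nv t : v \in tvset tv t -> (ov t != v) /\ (nv t != v) /\ (ov t != nv t).
Proof.
move=> vt; rewrite /ov /nv -{1 2}(idxP vt).
split; first by apply/negP => /eqP /tv_inj /eqP; rewrite nx_neq1.
split; first by apply/negP => /eqP /tv_inj /eqP; rewrite nx_neq2.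
by apply/negP => /eqP /tv_inj /eqP; rewrite eq_nx3.
Qed.

Lemma star (C : {set T}) :
  (forall t t' e, internal tv src dst e -> side tv src dst t e -> side tv src dst t' e ->
     v \in evset src dst e -> (t \in C) = (t' \in C)) ->
  forall t t', v \in tvset tv t -> v \in tvset tv t' -> t \in C -> t' \in C.
Proof.
move=> HC t t' vt vt' tC; apply: contrapT => /negP t'C.
pose K1 := [set u | (v \in tvset tv u) && (u \in C)].
pose K2 := [set u | (v \in tvset tv u) && (u \notin C)].
have K1v : forall u, u \in K1 -> v \in tvset tv u by move=> u; rewrite inE => /andP[].
have K2v : forall u, u \in K2 -> v \in tvset tv u by move=> u; rewrite inE => /andP[].
have K1c : forall u u' e, internal tv src dst e -> side tv src dst u e -> side tv src dst u' e ->
     v \in evset src dst e -> (u \in K1) = (u' \in K1).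
  move=> u u' e hi s1 s2 ve; rewrite !inE (side_vt s1 ve) (side_vt s2 ve) /=.
  exact: HC hi s1 s2 ve.
have K2c : forall u u' e, internal tv src dst e -> side tv src dst u e -> side tv src dst u' e ->
     v \in evset src dst e -> (u \in K2) = (u' \in K2).
  move=> u u' e hi s1 s2 ve; rewrite !inE (side_vt s1 ve) (side_vt s2 ve) /=.
  by rewrite (HC _ _ _ hi s1 s2 ve).
have tK1 : t \in K1 by rewrite inE vt tC.
have t'K2 : t' \in K2 by rewrite inE vt' t'C.
have dpos : forall u, v \in tvset tv u ->
    0 < ((o' u).1 + (n' u).1) ^+ 2 + ((o' u).2 + (n' u).2) ^+ 2.
  move=> u vu; rewrite lt0r; apply/andP; split; last by apply: addr_ge0; apply: sqr_ge0.
  apply/eqP => h.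
  have h1 : (o' u).1 + (n' u).1 = 0.
    apply/eqP; rewrite -sqrf_eq0; apply/eqP.
    have := sqr_ge0 ((o' u).1 + (n' u).1); have := sqr_ge0 ((o' u).2 + (n' u).2); lra.
  have h2 : (o' u).2 + (n' u).2 = 0.
    apply/eqP; rewrite -sqrf_eq0; apply/eqP.
    have := sqr_ge0 ((o' u).1 + (n' u).1); have := sqr_ge0 ((o' u).2 + (n' u).2); lra.
  have := Dnz u; rewrite -det_on // /det2.
  have -> : (n' u).1 = - (o' u).1 by lra.
  have -> : (n' u).2 = - (o' u).2 by lra.
  have -> : (o' u).1 * - (o' u).2 - (o' u).2 * - (o' u).1 = 0 by ring.
  by rewrite eqxx.
case: (pselect (forall u, u \in K1 -> out_int u)) => [H1|H1].
  have [u uK1 cu] : exists2 u, u \in K1 &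
      cov u ((o' t').1 + (n' t').1, (o' t').2 + (n' t').2).
    by apply: (cover K1v K1c H1 tK1); exact: dpos.
  apply: (overlap (K1v u uK1) vt' _ cu).
  apply/negP => /eqP HE; move: uK1 t'K2; rewrite HE !inE => /andP[_ ->] /andP[_].
  by rewrite /negb.
case: (pselect (forall u, u \in K2 -> out_int u)) => [H2|H2].
  have [u uK2 cu] : exists2 u, u \in K2 &
      cov u ((o' t).1 + (n' t).1, (o' t).2 + (n' t).2).
    by apply: (cover K2v K2c H2 t'K2); exact: dpos.
  apply: (overlap (K2v u uK2) vt _ cu).
  apply/negP => /eqP HE; move: uK2 tK1; rewrite HE !inE => /andP[_ h] /andP[_ h'].
  by rewrite h' in h.
have [ta taK Ha] : exists2 u, u \in K1 & ~ out_int u.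
  apply: contrapT => hn; apply: H1 => u uK; apply: contrapT => ho; apply: hn; by exists u.
have [tc tcK Hc] : exists2 u, u \in K2 & ~ out_int u.
  apply: contrapT => hn; apply: H2 => u uK; apply: contrapT => ho; apply: hn; by exists u.
have [tb tbK Hb] := caseB K1v K1c (ex_intro2 _ _ ta taK Ha).
have [td tdK Hd] := caseB K2v K2c (ex_intro2 _ _ tc tcK Hc).
have [ea [Ea na sa]] := out_edge (K1v _ taK) Ha.
have [eb [Eb nb sb]] := in_edge (K1v _ tbK) Hb.
have [ec [Ec nc sc]] := out_edge (K2v _ tcK) Hc.
have [ed [Ed nd sd]] := in_edge (K2v _ tdK) Hd.
have va : v \in evset src dst ea by rewrite Ea set21.
have vb : v \in evset src dst eb by rewrite Eb set22.
have vc : v \in evset src dst ec by rewrite Ec set21.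
have vd : v \in evset src dst ed by rewrite Ed set22.
have K12 : forall u u', u \in K1 -> u' \in K2 -> u != u'.
  move=> u u' uK u'K; apply/negP => /eqP HE; move: uK u'K; rewrite HE !inE.
  by move=> /andP[_ ->] /andP[_].
have Dab : forall u u' e e', evset src dst e = [set v; ov u] -> evset src dst e' = [set nv u'; v] ->
    ~~ internal tv src dst e -> side tv src dst u e -> side tv src dst u' e' ->
    v \in tvset tv u -> e != e'.
  move=> u u' e e' HE HE' ni s1 s2 vu; apply/negP => /eqP HE0.
  rewrite -HE0 in s2 HE'; have E' := nonint_unique ni s1 s2; rewrite -E' in HE'.
  have [h1 [h2 h3]] := ov_nv vu.
  move: HE'; rewrite HE => HE'.
  case: (set2_eq HE' (h2 : nv u != v)) => [[h4 _]|[_ h5]].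
    by move: h2; rewrite -h4 eqxx.
  by move: h3; rewrite h5 eqxx.
have ab : ea != eb by apply: (Dab ta tb) => //; exact: K1v.
have cd : ec != ed by apply: (Dab tc td) => //; exact: K2v.
have Dx : forall u u' e e', ~~ internal tv src dst e -> side tv src dst u e ->
    side tv src dst u' e' -> u != u' -> e != e'.
  move=> u u' e e' ni s1 s2 hne; apply/negP => /eqP HE; rewrite -HE in s2.
  by move: hne; rewrite (nonint_unique ni s1 s2) eqxx.
have ac : ea != ec by apply: (Dx ta tc) => //; apply: K12.
have ad : ea != ed by apply: (Dx ta td) => //; apply: K12.
have bc : eb != ec by apply: (Dx tb tc) => //; apply: K12.
have bd : eb != ed by apply: (Dx tb td) => //; apply: K12.
have bv : bdry p tv (p v) by apply: (segment_bdry na); apply: pv_segment.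
have [e1 [e2 [_ [_ [_ [_ [_ Hall]]]]]]] := Hpoly bv.
have ha := Hall ea va (segment_bdry na).
have hb := Hall eb vb (segment_bdry nb).
have hc := Hall ec vc (segment_bdry nc).
have hd := Hall ed vd (segment_bdry nd).
move: ab cd ac ad bc bd.
by case: ha => ->; case: hb => ->; case: hc => ->; case: hd => ->; rewrite ?eqxx.
Qed.


End Vert.

Local Notation G := (Gmx p tv src dst).
Local Notation RI := (RowI tv src dst).
Local Notation EI := (Eint tv src dst).
Local Notation del t e := (delta R tv src dst t e).
Local Notation ca e := (c_coef p src dst e).
Local Notation aa e := (a_coef p src dst e).
Local Notation bb e := (b_coef p src dst e).

Definition vec (f : RI -> R) : 'rV[R]_#|{: RI}| := \row_k f (enum_val k).

Lemma vecK (u : 'rV[R]_#|{: RI}|) : vec (fun r => u 0 (enum_rank r)) = u.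
Proof. by apply/rowP => k; rewrite mxE enum_valK. Qed.

Lemma mulG f c : (vec f *m G) 0 (enum_rank c) = \sum_r f r * Gfun p r c.
Proof.
rewrite !mxE (big_enum_val (fun r => f r * Gfun p r c)) /=.
by apply: eq_bigr => k _; rewrite !mxE enum_rankK.
Qed.

Definition fX (f : RI -> R) t := f (inl (inl (inl t))).
Definition fY (f : RI -> R) t := f (inl (inl (inr t))).
Definition fZ (f : RI -> R) t := f (inl (inr t)).
Definition fW (f : RI -> R) (e : EI) := f (inr e).

Lemma sum_if (F : EI -> R) (e : EI) (c : R) :
  \sum_(f0 : EI) F f0 * (if f0 == e then c else 0) = F e * c.
Proof.
rewrite (bigD1 e) //= eqxx big1 ?addr0 // => f0 /negPf ->; exact: mulr0.
Qed.

Lemma sumT0 (F : T -> R) : \sum_i F i * 0 = 0.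
Proof. by apply: big1 => i _; rewrite mulr0. Qed.

Lemma colX f (e : EI) : \sum_r f r * Gfun p r (inl (inl e)) =
  \sum_t fX f t * del t (val e) + fW f e * ca (val e).
Proof.
rewrite !big_sumType /= !sumT0 !addr0 (sum_if (fun i => f (inr i))).
by [].
Qed.

Lemma colY f (e : EI) : \sum_r f r * Gfun p r (inl (inr e)) =
  \sum_t fY f t * del t (val e) + fW f e * aa (val e).
Proof.
rewrite !big_sumType /= !sumT0 add0r addr0 (sum_if (fun i => f (inr i))).
by [].
Qed.

Lemma colZ f (e : EI) : \sum_r f r * Gfun p r (inr e) =
  \sum_t fZ f t * del t (val e) + fW f e * bb (val e).
Proof.
rewrite !big_sumType /= !sumT0 !add0r (sum_if (fun i => f (inr i))).
by [].
Qed.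

Lemma kerP f : vec f *m G = 0 <-> forall e : EI,
  [/\ \sum_t fX f t * del t (val e) + fW f e * ca (val e) = 0,
      \sum_t fY f t * del t (val e) + fW f e * aa (val e) = 0 &
      \sum_t fZ f t * del t (val e) + fW f e * bb (val e) = 0].
Proof.
split.
  move=> H e; rewrite -colX -colY -colZ -!mulG H !mxE; by split.
move=> H; apply/rowP => j; rewrite [RHS]mxE -[j]enum_valK mulG.
case: (enum_val j) => [[c|c]|c]; [rewrite colX | rewrite colY | rewrite colZ];
  by case: (H c).
Qed.

Lemma alg_edge (d F0 F1 F2 A1 A2 B1 B2 a b c : R) :
  a = B2 - A2 -> b = A1 - B1 -> c = B1 * A2 - B2 * A1 ->
  a ^+ 2 + b ^+ 2 != 0 -> F0 + F1 * A1 + F2 * A2 = 0 -> F0 + F1 * B1 + F2 * B2 = 0 ->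
  let W := - ((d * F1) * a + (d * F2) * b) / (a ^+ 2 + b ^+ 2) in
  [/\ d * F0 + W * c = 0, d * F1 + W * a = 0 & d * F2 + W * b = 0].
Proof.
move=> -> -> -> hn H0 H1 W.
have E0 : d * F0 + W * (B1 * A2 - B2 * A1) = d * ((F0 + F1 * A1 + F2 * A2) * ((B2 - A2) ^+ 2 + (A1 - B1) ^+ 2)
   - ((B2 - A2) * A2 - (A1 - B1) * A1) * ((F0 + F1 * B1 + F2 * B2) - (F0 + F1 * A1 + F2 * A2))) / ((B2 - A2) ^+ 2 + (A1 - B1) ^+ 2).
  by rewrite /W; field.
have E1 : d * F1 + W * (B2 - A2) = d * (- (A1 - B1) * ((F0 + F1 * B1 + F2 * B2) - (F0 + F1 * A1 + F2 * A2)))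
   / ((B2 - A2) ^+ 2 + (A1 - B1) ^+ 2).
  by rewrite /W; field.
have E2 : d * F2 + W * (A1 - B1) = d * ((B2 - A2) * ((F0 + F1 * B1 + F2 * B2) - (F0 + F1 * A1 + F2 * A2)))
   / ((B2 - A2) ^+ 2 + (A1 - B1) ^+ 2).
  by rewrite /W; field.
by rewrite E0 E1 E2 H0 H1 subrr !mulr0 !mul0r subrr !mulr0 mul0r.
Qed.

Lemma alg_cont (d F0 F1 F2 A1 A2 B1 B2 a b c W : R) :
  a = B2 - A2 -> b = A1 - B1 -> c = B1 * A2 - B2 * A1 -> d != 0 ->
  d * F0 + W * c = 0 -> d * F1 + W * a = 0 -> d * F2 + W * b = 0 ->
  F0 + F1 * A1 + F2 * A2 = 0 /\ F0 + F1 * B1 + F2 * B2 = 0.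
Proof.
move=> ha hb hc hd H0 H1 H2.
have EA : d * (F0 + F1 * A1 + F2 * A2) = (d * F0 + W * c) + (d * F1 + W * a) * A1
   + (d * F2 + W * b) * A2 by rewrite hc ha hb; ring.
have EB : d * (F0 + F1 * B1 + F2 * B2) = (d * F0 + W * c) + (d * F1 + W * a) * B1
   + (d * F2 + W * b) * B2 by rewrite hc ha hb; ring.
rewrite H0 H1 H2 !mul0r !addr0 in EA EB.
split; [move/eqP: EA | move/eqP: EB]; by rewrite mulf_eq0 (negPf hd) => /eqP.
Qed.

Lemma pos_neq t i j : i != j -> P t i != P t j.
Proof.
move=> hij; apply/eqP => h; have := lam_vert t i i; rewrite h lam_vert eqxx (negPf hij).
by move/eqP; rewrite eq_sym oner_eq0.
Qed.

Lemma sq2_eq0 (x y : R) : x ^+ 2 + y ^+ 2 = 0 -> x = 0 /\ y = 0.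
Proof.
move=> h; have hx := sqr_ge0 x; have hy := sqr_ge0 y.
split; apply/eqP; rewrite -sqrf_eq0; apply/eqP; lra.
Qed.

Lemma edge_n e : (exists t, side tv src dst t e) -> aa e ^+ 2 + bb e ^+ 2 != 0.
Proof.
move=> [t st]; have [k Ek] := side_evset st.
have Hd : P t k != P t (nx k) by apply: pos_neq; rewrite eq_nx1.
have Hne : p (src e) != p (dst e).
  have Hab : tv t k != tv t (nx k) by apply: contra Hd => /eqP ->.
  by case: (set2_eq Ek Hab) => [[-> ->]|[-> ->]] //; rewrite eq_sym.
apply/eqP => /sq2_eq0 [h1 h2]; move/eqP: Hne; apply.
rewrite /a_coef /b_coef in h1 h2.
rewrite [p (src e)]surjective_pairing [p (dst e)]surjective_pairing.
congr (_, _); lra.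
Qed.

Definition Wof (Y Z : T -> R) (e : EI) : R :=
  - ((\sum_t Y t * del t (val e)) * aa (val e) + (\sum_t Z t * del t (val e)) * bb (val e))
  / (aa (val e) ^+ 2 + bb (val e) ^+ 2).

Definition mk (X Y Z : T -> R) : RI -> R := fun r =>
  match r with
  | inl (inl (inl t)) => X t
  | inl (inl (inr t)) => Y t
  | inl (inr t) => Z t
  | inr e => Wof Y Z e
  end.

Lemma int_side (e : EI) : exists t, side tv src dst t (val e).
Proof.
have [t1 [t2 [_ HS]]] := internal_two (valP e).
by exists t1; move: (set21 t1 t2); rewrite -HS inE.
Qed.

Lemma mk_ker X Y Z :
  (forall (e : EI) t1 t2, t1 != t2 -> sideS (val e) = [set t1; t2] ->
     (X t1 - X t2) + (Y t1 - Y t2) * (p (src (val e))).1 + (Z t1 - Z t2) * (p (src (val e))).2 = 0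
  /\ (X t1 - X t2) + (Y t1 - Y t2) * (p (dst (val e))).1 + (Z t1 - Z t2) * (p (dst (val e))).2 = 0) ->
  vec (mk X Y Z) *m G = 0.
Proof.
move=> H; apply/kerP => e.
have [t1 [t2 [Hne HS]]] := internal_two (valP e).
have [HX _] := sum_delta X Hne HS.
have [HY _] := sum_delta Y Hne HS.
have [HZ Hd] := sum_delta Z Hne HS.
have [H0 H1] := H e t1 t2 Hne HS.
rewrite /fX /fY /fZ /fW /= /Wof HX HY HZ.
have := alg_edge (delta R tv src dst t1 (val e)) erefl erefl erefl (edge_n (int_side e)) H0 H1.
by case => h1 h2 h3; split.
Qed.

Lemma ker_cont f : vec f *m G = 0 ->
  forall (e : EI) t1 t2, t1 != t2 -> sideS (val e) = [set t1; t2] ->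
  let g t Q := fX f t + fY f t * Q.1 + fZ f t * Q.2 in
  g t1 (p (src (val e))) = g t2 (p (src (val e))) /\
  g t1 (p (dst (val e))) = g t2 (p (dst (val e))).
Proof.
move=> /kerP H e t1 t2 Hne HS g.
have [HX _] := sum_delta (fX f) Hne HS.
have [HY _] := sum_delta (fY f) Hne HS.
have [HZ Hd] := sum_delta (fZ f) Hne HS.
have [E0 E1 E2] := H e.
rewrite HX in E0; rewrite HY in E1; rewrite HZ in E2.
have hd : delta R tv src dst t1 (val e) != 0.
  by case: Hd => ->; rewrite ?oppr_eq0 oner_eq0.
have [h1 h2] := alg_cont erefl erefl erefl hd E0 E1 E2.
by rewrite /g; split; apply/eqP; rewrite -subr_eq0; apply/eqP;
  [rewrite -h1 | rewrite -h2]; ring.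
Qed.

Definition hx (v : V) t := \sum_i (tv t i == v)%:R * lx t i.
Definition hy (v : V) t := \sum_i (tv t i == v)%:R * ly t i.
Definition hz (v : V) t := \sum_i (tv t i == v)%:R * lz t i.

Lemma hat_eval v t X : hx v t + hy v t * X.1 + hz v t * X.2
  = \sum_i (tv t i == v)%:R * lam t i X.
Proof.
rewrite /hx /hy /hz !mulr_suml -!big_split /=; apply: eq_bigr => i _.
rewrite lam_aff; ring.
Qed.

Lemma hat_vert v t j : hx v t + hy v t * (P t j).1 + hz v t * (P t j).2 = (tv t j == v)%:R.
Proof.
rewrite hat_eval (bigD1 j) //= lam_vert eqxx mulr1 big1 ?addr0 // => i /negPf hij.
by rewrite lam_vert hij mulr0.
Qed.

Lemma aff_diff (X Y Z : T -> R) t1 t2 (Q : R * R) :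
  (X t1 - X t2) + (Y t1 - Y t2) * Q.1 + (Z t1 - Z t2) * Q.2
  = (X t1 + Y t1 * Q.1 + Z t1 * Q.2) - (X t2 + Y t2 * Q.1 + Z t2 * Q.2).
Proof. ring. Qed.

Lemma vert_of t e u : side tv src dst t e -> u \in evset src dst e -> exists j, u = tv t j.
Proof. by move=> st /(side_vt st) /imsetP [j _ ->]; exists j. Qed.

Definition phi v := vec (mk (hx v) (hy v) (hz v)).

Lemma phi_ker v : phi v *m G = 0.
Proof.
apply: mk_ker => e t1 t2 Hne HS.
have s1 : side tv src dst t1 (val e) by move: (set21 t1 t2); rewrite -HS inE.
have s2 : side tv src dst t2 (val e) by move: (set22 t1 t2); rewrite -HS inE.
have Hu : forall u, u \in evset src dst (val e) ->
    (hx v t1 - hx v t2) + (hy v t1 - hy v t2) * (p u).1 + (hz v t1 - hz v t2) * (p u).2 = 0.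
  move=> u hu; have [j1 E1] := vert_of s1 hu; have [j2 E2] := vert_of s2 hu.
  by rewrite E1 aff_diff hat_vert -E1 E2 hat_vert subrr.
by split; apply: Hu; rewrite !inE eqxx ?orbT.
Qed.

Lemma aff_zero t c0 c1 c2 : (forall j, c0 + c1 * (P t j).1 + c2 * (P t j).2 = 0) ->
  [/\ c0 = 0, c1 = 0 & c2 = 0].
Proof.
move=> H.
have Hid : forall X : R * R, c0 + c1 * X.1 + c2 * X.2 = 0.
  move=> X.
  have HE : \sum_i (c0 + c1 * (P t i).1 + c2 * (P t i).2) * lam t i X = c0 + c1 * X.1 + c2 * X.2.
    rewrite (eq_bigr (fun i => c0 * lam t i X + c1 * (lam t i X * (P t i).1)
       + c2 * (lam t i X * (P t i).2))); last by move=> i _; ring.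
    by rewrite !big_split /= -!mulr_sumr lam_sum lam_comb1 lam_comb2 mulr1.
  by rewrite -HE big1 // => i _; rewrite H mul0r.
have h0 := Hid (0, 0); have h1 := Hid (1, 0); have h2 := Hid (0, 1).
rewrite /= !mulr0 !addr0 in h0; rewrite /= mulr1 mulr0 addr0 in h1.
rewrite /= mulr1 mulr0 addr0 in h2.
split; lra.
Qed.

Lemma side_pair e t1 t2 : internal tv src dst e -> t1 != t2 ->
  side tv src dst t1 e -> side tv src dst t2 e -> sideS e = [set t1; t2].
Proof.
move=> hi hne s1 s2; apply/esym/eqP; rewrite eqEcard; apply/andP; split.
  by apply/fintype.subsetP => u; rewrite !inE => /orP[]/eqP ->.
by rewrite cards2 hne; move/eqP: hi => ->.
Qed.

Hypothesis Hverts : mesh_vertices tv.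

Section Span.
Variable u : 'rV[R]_#|{: RI}|.
Hypothesis Hu : u *m G = 0.
Let f r := u 0 (enum_rank r).
Let g t (Q : R * R) := fX f t + fY f t * Q.1 + fZ f t * Q.2.

Lemma fker : vec f *m G = 0.
Proof. by rewrite vecK. Qed.

Lemma vert_agree v t t' : v \in tvset tv t -> v \in tvset tv t' -> g t (p v) = g t' (p v).
Proof.
move=> vt vt'.
have : t' \in [set s | g s (p v) == g t (p v)].
  apply: (@star v _ _ t t' vt vt'); last by rewrite inE.
  move=> t1 t2 e hi s1 s2 ve; rewrite !inE.
  case: (eqVneq t1 t2) => [-> //|hne].
  have HS := side_pair hi hne s1 s2.
  have [h1 h2] := ker_cont fker (e:=exist _ e hi) hne HS.
  simpl in h1, h2.
  by move: ve; rewrite !inE => /orP[]/eqP ->; rewrite /g ?h1 ?h2.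
by rewrite inE => /eqP.
Qed.

Definition vval (v : V) : R :=
  match [pick t | v \in tvset tv t] with Some t => g t (p v) | None => 0 end.

Lemma vval_eq v t : v \in tvset tv t -> vval v = g t (p v).
Proof.
move=> vt; rewrite /vval; case: pickP => [t' vt'|H]; first exact: vert_agree.
by move: (H t); rewrite vt.
Qed.

Lemma interp t : [/\ fX f t = \sum_v vval v * hx v t, fY f t = \sum_v vval v * hy v t
  & fZ f t = \sum_v vval v * hz v t].
Proof.
have := @aff_zero t (fX f t - \sum_v vval v * hx v t) (fY f t - \sum_v vval v * hy v t)
  (fZ f t - \sum_v vval v * hz v t).
case.
- move=> j.
  have -> : fX f t - \sum_v vval v * hx v t + (fY f t - \sum_v vval v * hy v t) * (P t j).1 +
    (fZ f t - \sum_v vval v * hz v t) * (P t j).2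
    = g t (P t j) - \sum_v vval v * (hx v t + hy v t * (P t j).1 + hz v t * (P t j).2).
    have Hs : \sum_v vval v * (hx v t + hy v t * (P t j).1 + hz v t * (P t j).2)
      = \sum_v vval v * hx v t + (\sum_v vval v * hy v t) * (P t j).1
        + (\sum_v vval v * hz v t) * (P t j).2.
      by rewrite !mulr_suml -!big_split /=; apply: eq_bigr => v _; ring.
    rewrite Hs /g; ring.
  rewrite (eq_bigr (fun v => (tv t j == v)%:R * vval v)); last first.
    by move=> v _; rewrite hat_vert mulrC.
  by rewrite sum_ind -vval_eq ?subrr // tv_in.
by move=> h0 h1 h2; split; apply/eqP; rewrite -subr_eq0; apply/eqP.
Qed.

Lemma span : u = \sum_v vval v *: phi v.
Proof.
pose u' := u - \sum_v vval v *: phi v.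
have Hu' : u' *m G = 0.
  rewrite /u' mulmxBl mulmx_suml Hu big1 ?subrr // => v _.
  by rewrite -scalemxAl phi_ker scaler0.
pose f' r := u' 0 (enum_rank r).
have Ef' : forall r, f' r = f r - \sum_v vval v * mk (hx v) (hy v) (hz v) r.
  move=> r; rewrite /f' /u' !mxE summxE; congr (_ - _); apply: eq_bigr => v _.
  by rewrite !mxE enum_rankK.
have HX : forall t, fX f' t = 0 by move=> t; rewrite /fX Ef' /= -/(fX f t); case: (interp t) => -> _ _; rewrite subrr.
have HY : forall t, fY f' t = 0 by move=> t; rewrite /fY Ef' /= -/(fY f t); case: (interp t) => _ -> _; rewrite subrr.
have HZ : forall t, fZ f' t = 0 by move=> t; rewrite /fZ Ef' /= -/(fZ f t); case: (interp t) => _ _ ->; rewrite subrr.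
have Hk : vec f' *m G = 0 by rewrite vecK.
have HW : forall e, fW f' e = 0.
  move=> e; have [E0 E1 E2] := (proj1 (kerP f') Hk) e.
  have S1 : \sum_t fY f' t * del t (val e) = 0 by apply: big1 => t _; rewrite HY mul0r.
  have S2 : \sum_t fZ f' t * del t (val e) = 0 by apply: big1 => t _; rewrite HZ mul0r.
  rewrite S1 add0r in E1; rewrite S2 add0r in E2.
  have hn := edge_n (int_side e).
  apply/eqP; rewrite -(mulIr_eq0 _ (rregP hn)); apply/eqP.
  have -> : fW f' e * (aa (sval e) ^+ 2 + bb (sval e) ^+ 2)
     = (fW f' e * aa (sval e)) * aa (sval e) + (fW f' e * bb (sval e)) * bb (sval e) by ring.
  by rewrite E1 E2 !mul0r addr0.
have Hz : u' = 0.
  have Hf' : forall r, f' r = 0.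
    by case => [[[t|t]|t]|ee]; [exact: HX | exact: HY | exact: HZ | exact: HW].
  rewrite -(vecK u'); apply/rowP => k; rewrite mxE [RHS]mxE; exact: Hf'.
by move/eqP: Hz; rewrite subr_eq0 => /eqP.
Qed.

End Span.

Lemma vert_closure v : closure (Omega p tv) (p v).
Proof.
have [t vt] := Hverts v; move: (vt) => /imsetP [j _ ->].
apply: (@tri_closure t); apply/tri_lamP => i; rewrite lam_vert; exact: ler0n.
Qed.

Lemma card_part : (#|int_vertices p tv| + #|bdry_vertices p tv|)%N = #|V|.
Proof.
have -> : bdry_vertices p tv = ~: int_vertices p tv.
  apply/setP => v; rewrite !inE.
  case: (pselect (Omega p tv (p v))) => h.
    rewrite (asboolT h) /=; apply: asboolF => -[_]; exact.
  by rewrite (asboolF h) /=; apply: asboolT; split => //; apply: vert_closure.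
exact: cardsC.
Qed.

Lemma sum_pick (w : 'rV[R]_#|V|) (a : V) :
  \sum_i w 0 i * (a == enum_val i)%:R = w 0 (enum_rank a).
Proof.
rewrite (bigD1 (enum_rank a)) //= enum_rankK eqxx mulr1 big1 ?addr0 // => i hi.
case: eqP => [ha|]; last by rewrite mulr0.
by move: hi; rewrite ha enum_valK eqxx.
Qed.

Lemma combE (w : 'rV[R]_#|V|) r :
  (\sum_i w 0 i *: phi (enum_val i)) 0 (enum_rank r)
  = \sum_i w 0 i * mk (hx (enum_val i)) (hy (enum_val i)) (hz (enum_val i)) r.
Proof. by rewrite summxE; apply: eq_bigr => i _; rewrite !mxE enum_rankK. Qed.

Lemma main_geo : let G := Gmx p tv src dst in
  \rank (kermx G) = (#|int_vertices p tv| + #|bdry_vertices p tv|)%N /\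
  (#|int_vertices p tv| + #|bdry_vertices p tv|)%N = #|V| /\
  exists phi : V -> 'rV[R]_(#|{: RowI tv src dst}|),
    let B := \matrix_(i < #|V|) phi (enum_val i) in
    row_free B /\ (B == kermx G)%MS.
Proof.
move=> G0.
pose B := \matrix_(i < #|V|) phi (enum_val i).
have HBmul : forall w : 'rV[R]_#|V|, w *m B = \sum_i w 0 i *: phi (enum_val i).
  by move=> w; rewrite mulmx_sum_row; apply: eq_bigr => i _; rewrite rowK.
have Hfree : row_free B.
  apply: inj_row_free => w Hw; rewrite HBmul in Hw.
  have H0 : forall r, \sum_i w 0 i * mk (hx (enum_val i)) (hy (enum_val i)) (hz (enum_val i)) r = 0.
    by move=> r; rewrite -combE Hw mxE.
  apply/rowP => k; rewrite mxE.
  have [t vt] := Hverts (enum_val k); move: (vt) => /imsetP [j _ Ej].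
  rewrite -[k]enum_valK Ej -sum_pick.
  have hX := H0 (inl (inl (inl t))); have hY := H0 (inl (inl (inr t)));
  have hZ := H0 (inl (inr t)); rewrite /= in hX hY hZ.
  rewrite (eq_bigr (fun i => w 0 i * hx (enum_val i) t
     + (w 0 i * hy (enum_val i) t) * (P t j).1 + (w 0 i * hz (enum_val i) t) * (P t j).2)).
    by rewrite !big_split /= -!mulr_suml hX hY hZ !mul0r !addr0.
  by move=> i _; rewrite -hat_vert; ring.
have Hsub1 : (B <= kermx G0)%MS.
  apply/sub_kermxP; apply/row_matrixP => i; rewrite row_mul rowK row0; exact: phi_ker.
have Hsub2 : (kermx G0 <= B)%MS.
  apply/row_subP => i; apply/submxP.
  have Hr : row i (kermx G0) *m G0 = 0 by rewrite -row_mul mulmx_ker row0.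
  exists (\row_k vval (row i (kermx G0)) (enum_val k)).
  rewrite HBmul [LHS](span Hr).
  rewrite (big_enum_val (fun v => vval (row i (kermx G0)) v *: phi v)) /=.
  by apply: eq_bigr => k _; rewrite mxE.
have Heq : (B == kermx G0)%MS by apply/andP; split.
have Hrank : \rank (kermx G0) = #|V|.
  by rewrite -(eqmx_rank Heq); apply/eqP.
split; first by rewrite Hrank card_part.
split; first exact: card_part.
by exists phi.
Qed.

End Geo.

Unset Implicit Arguments.
Set Strict Implicit.

Theorem proposition5 (R : realType) (V T E : finType) (p : V -> R * R)
  (tv : T -> 'I_3 -> V) (src dst : E -> V)
  (Hrot : same_rotation_sense p tv)
  (Hconf : conforming p tv)
  (Hverts : mesh_vertices tv)
  (Hedges : mesh_edges tv src dst)
  (Hconn : domain_connected p tv)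
  (Hpoly : polygonal_boundary p tv src dst)
  (Hone : one_bdry_edge p tv src dst) :
  let G := Gmx p tv src dst in
  \rank (kermx G) = (#|int_vertices p tv| + #|bdry_vertices p tv|)%N /\
  (#|int_vertices p tv| + #|bdry_vertices p tv|)%N = #|V| /\
  exists phi : V -> 'rV[R]_(#|{: RowI tv src dst}|),
    let B := \matrix_(i < #|V|) phi (enum_val i) in
    row_free B /\ (B == kermx G)%MS.
Proof.
have [sg Hsg] : exists sg : R, forall t, 0 < sg * tri_det p tv t.
  case: Hrot => H; [exists 1 | exists (-1)] => t; rewrite ?mul1r ?mulN1r ?oppr_gt0; exact: H.
have Dnz : forall t, tri_det p tv t != 0.
  by move=> t; apply/eqP => h; move: (Hsg t); rewrite h mulr0 ltxx.
exact: (main_geo Dnz Hsg Hconf Hedges Hpoly Hverts).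
Qed.
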